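(* Let $G=(V,E)$ be a strongly connected directed multigraph with distinct vertices $s,t\in V$ such that $G$ contains at least one arc $(t,s)$. Let $f$ be a flow from $s$ to $t$ in $G$ that does not use any arc $(t,s)$. If there is a directed path from $s$ to $t$ in $G_f$, then $G_f$ is strongly connected.
   Context: A flow from $s$ to $t$ in $G$ is a set of arc-disjoint directed paths from $s$ to $t$ in $G$. The residual graph $G_f$ is obtained from $G$ by reversing each arc lying on a path of $f$. (In the paper, $G$ arises from an input graph by adding $m$ parallel arcs $(t,s)$ and keeping only the strongly connected component containing $s$ and $t$.) *)

(* Defs.v *)
(* A directed multigraph on vertex set V (a finType) is given by
   a finite arc type A with tail/head maps [src dst : A -> V]; parallel arcs and
   loops are allowed. *)
From mathcomp Require Import all_boot.
Set Implicit Arguments. Unset Strict Implicit. Unset Printing Implicit Defensive.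

Section Digraph.
Variables (V A : finType) (src dst : A -> V).

Fixpoint is_walk (u v : V) (p : seq A) : bool :=
  match p with
  | [::] => u == v
  | a :: p' => (src a == u) && is_walk (dst a) v p'
  end.

Definition walk_vertices (u : V) (p : seq A) : seq V := u :: map dst p.

Definition is_dpath (u v : V) (p : seq A) : bool :=
  is_walk u v p && uniq (walk_vertices u p).

Definition strongly_connected : Prop :=
  forall u v : V, exists p : seq A, is_dpath u v p.

(* A flow from s to t: a set (list) of arc-disjoint directed s-t paths. *)
Definition is_flow (s t : V) (f : seq (seq A)) : bool :=
  all (is_dpath s t) f && uniq (flatten f).

Definition flow_arcs (f : seq (seq A)) : seq A := flatten f.

End Digraph.

(* Residual graph G_f: same vertices and arcs, every arc on a path of f reversed. *)
Definition res_src (V A : finType) (src dst : A -> V) (f : seq (seq A)) (a : A) : V :=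
  if a \in flow_arcs f then dst a else src a.
Definition res_dst (V A : finType) (src dst : A -> V) (f : seq (seq A)) (a : A) : V :=
  if a \in flow_arcs f then src a else dst a.

(* Main.v *)
Require Import Defs.
From mathcomp Require Import all_boot.
Set Implicit Arguments. Unset Strict Implicit. Unset Printing Implicit Defensive.

Section Gen.
Variables (V A : finType) (src dst : A -> V).

Lemma walk_catE u w p q : is_walk src dst u w (p ++ q) =
  is_walk src dst u (last u (map dst p)) p && is_walk src dst (last u (map dst p)) w q.
Proof.
elim: p u => [|a p IH] u /=; first by rewrite eqxx.
by rewrite IH andbA.
Qed.

Lemma walk_last u v p : is_walk src dst u v p -> last u (map dst p) = v.
Proof.
elim: p u => [|a p IH] u /=; first by move/eqP.
by case/andP=> _ /IH.
Qed.

Lemma walk_cat u v w p q : is_walk src dst u v p -> is_walk src dst v w q ->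
  is_walk src dst u w (p ++ q).
Proof.
by move=> Hp Hq; rewrite walk_catE (walk_last Hp) Hp Hq.
Qed.

Lemma walk_suffix x v q u : is_walk src dst x v q -> u \in walk_vertices dst x q ->
  exists q2, is_walk src dst u v q2 /\
    (uniq (walk_vertices dst x q) -> uniq (walk_vertices dst u q2)).
Proof.
elim: q x => [|b q IH] x /=.
  rewrite inE => /eqP -> /eqP ->; exists [::]; by rewrite /= eqxx.
case/andP=> /eqP Hb Hw; rewrite inE; case: eqP => [->|_] /=.
  by move=> _; exists (b :: q); rewrite /= Hb eqxx Hw.
move=> Hu; have [q2 [H1 H2]] := IH _ Hw Hu.
by exists q2; split => // /andP [] _.
Qed.

Lemma walk_dpath u v p : is_walk src dst u v p -> exists q, is_dpath src dst u v q.
Proof.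
elim: p u => [|a p IH] u /=.
  by move=> H; exists [::]; rewrite /is_dpath /= H.
case/andP=> /eqP Ha /IH [q /andP [Hw Hu]].
case Hin: (u \in walk_vertices dst (dst a) q).
  have [q2 [H1 H2]] := walk_suffix Hw Hin.
  by exists q2; rewrite /is_dpath H1 H2.
exists (a :: q); rewrite /is_dpath /= Ha eqxx Hw /=.
by rewrite /walk_vertices in Hin Hu; rewrite Hin; exact: Hu.
Qed.

End Gen.

Theorem lemma1p3 (V A : finType) (src dst : A -> V) (s t : V)
  (f : seq (seq A)) :
  strongly_connected src dst ->
  s != t ->
  (exists a : A, src a = t /\ dst a = s) ->
  is_flow src dst s t f ->
  (forall a : A, a \in flow_arcs f -> ~ (src a = t /\ dst a = s)) ->
  (exists p : seq A, is_dpath (res_src src dst f) (res_dst src dst f) s t p) ->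
  strongly_connected (res_src src dst f) (res_dst src dst f).
Proof.
move=> Hsc _ [a0 [Ha0s Ha0d]] /andP [Hall _] Hnot [p0 /andP [Hp0 _]].
set rs := res_src src dst f; set rd := res_dst src dst f.
pose R u v := exists p, is_walk rs rd u v p.
have Rtrans u v w : R u v -> R v w -> R u w.
  by move=> [p Hp] [q Hq]; exists (p ++ q); apply: walk_cat Hp Hq.
have Rst : R s t by exists p0.
have Rts : R t s.
  exists [:: a0]; rewrite /= /rs /rd /res_src /res_dst.
  case: ifP => [H|_]; first by case: (Hnot _ H).
  by rewrite Ha0s Ha0d !eqxx.
have Rrev x y q : is_walk src dst x y q -> all (mem (flow_arcs f)) q ->
    is_walk rs rd y x (rev q).
  elim: q x => [|b q IH] x /=; first by rewrite eq_sym.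
  case/andP=> /eqP Hb Hw /andP [Hbin Hq].
  rewrite rev_cons -cats1; apply: (walk_cat (IH _ Hw Hq)).
  by rewrite /= /rs /rd /res_src /res_dst Hbin Hb !eqxx.
have Rflow a : a \in flow_arcs f -> R (src a) (dst a).
  move=> Ha; have := Ha; rewrite /flow_arcs => /flattenP [P HPf HaP].
  have /andP [HP _] := allP Hall P HPf.
  have HPin : all (mem (flow_arcs f)) P.
    by apply/allP => b Hb; apply/flattenP; exists P.
  move: HP HPin; case/splitPr: HaP => P1 P2.
  rewrite walk_catE all_cat /= => /and3P [H1 /eqP Hm H2] /and3P [HP1 _ HP2].
  rewrite -Hm in H1.
  have Ra : R (dst a) (src a).
    by exists [:: a]; rewrite /= /rs /rd /res_src /res_dst Ha !eqxx.
  apply: Rtrans (Rtrans _ _ _ Rst _).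
    by exists (rev P1); apply: Rrev.
  by exists (rev P2); apply: Rrev.
have Rarc a : R (src a) (dst a).
  case Ha: (a \in flow_arcs f); first exact: Rflow.
  by exists [:: a]; rewrite /= /rs /rd /res_src /res_dst Ha !eqxx.
move=> u v; have [p /andP [Hp _]] := Hsc u v.
suff [q Hq] : R u v by apply: walk_dpath Hq.
elim: p u Hp => [|a p IH] u /=.
  by move/eqP ->; exists [::]; rewrite /= eqxx.
case/andP=> /eqP <- /IH; exact: Rtrans.
Qed.
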